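(* Let $R$ be a ring such that the polynomial ring $R[t]$ in one indeterminate is Cohen-Macaulay. Then $R$ is Cohen-Macaulay.
   Context: All rings are commutative with identity. For $x\in R$ let $C(x)$ be the complex $0\to R\to R_x\to 0$ ($R$ in degree $0$, natural localization map); for a finite sequence $\mathbf x=x_1,\dots,x_\ell$ put $C(\mathbf x)=C(x_1)\otimes_R\cdots\otimes_R C(x_\ell)$ and let $H^i_{\mathbf x}(M)$ be the $i$th cohomology of $C(\mathbf x)\otimes_R M$; $\ell(\mathbf x)=\ell$. Let $K(x)$ be $0\to R\xrightarrow{x}R\to 0$ (degrees $1,0$), $K(\mathbf x)=K(x_1)\otimes\cdots\otimes K(x_\ell)$, $H_i(\mathbf x)$ its homology. For $m\ge n$ the chain map $K(\mathbf x^m)\to K(\mathbf x^n)$ ($\mathbf x^m=x_1^m,\dots,x_\ell^m$) is the tensor product of the maps $K(x_i^m)\to K(x_i^n)$ given by multiplication by $x_i^{m-n}$ in degree $1$ and identity in degree $0$. $\mathbf x$ is weakly proregular if for every $n$ there is $m\ge n$ with $H_i(\mathbf x^m)\to H_i(\mathbf x^n)$ zero for all $i\ge1$. $\mathbf x$ is a parameter sequence on $R$ if it is weakly proregular, $(\mathbf x)R\neq R$, and $H^{\ell(\mathbf x)}_{\mathbf x}(R)_p\neq0$ for every prime $p\supseteq(\mathbf x)R$ (the empty sequence is a parameter sequence). It is a strong parameter sequence if $x_1,\dots,x_i$ is a parameter sequence for each $i=1,\dots,\ell(\mathbf x)$. A regular sequence on $M$: each $x_i$ is a non-zero-divisor on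 $M/(x_1,\dots,x_{i-1})M$ and $M\neq(\mathbf x)M$. A ring $R$ is Cohen-Macaulay if every strong parameter sequence on $R$ is a regular sequence on $R$. *)

(* Defs.v *)
From mathcomp Require Import all_boot all_order all_algebra.
Set Implicit Arguments. Unset Strict Implicit. Unset Printing Implicit Defensive.
Import GRing.Theory.
Local Open Scope ring_scope.

Section Defs.
Variable R : comNzRingType.

Definition in_ideal (xs : seq R) (r : R) : Prop :=
  exists c : 'I_(size xs) -> R, r = \sum_(j < size xs) c j * xs`_j.

Definition prime_ideal (p : R -> Prop) : Prop :=
  [/\ p 0, (forall a b, p a -> p b -> p (a + b)),
      (forall a b, p b -> p (a * b)), ~ p 1 &
      (forall a b, p (a * b) -> p a \/ p b)].

(* K(y) = K(y_1) (x) ... (x) K(y_l) has basis e_S, S a subset of 'I_l, e_S in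
   degree #|S|.  A chain is a coefficient function c : {set 'I_l} -> R. The
   differential is d(e_S) = sum_{j in S} (-1)^#{k in S, k<j} y_j e_{S\{j}};
   the coefficient of (d c) at T is therefore computed below. *)
Definition koszul_d (l : nat) (y : 'I_l -> R) (c : {set 'I_l} -> R)
    (T : {set 'I_l}) : R :=
  \sum_(j < l | j \notin T)
     (-1) ^+ #|[set k in T | (k < j)%N]| * y j * c (j |: T).

Definition homog (l i : nat) (c : {set 'I_l} -> R) : Prop :=
  forall S : {set 'I_l}, #|S| <> i -> c S = 0.

(* the comparison chain map K(y^m) -> K(y^n), m >= n: on e_S it is
   multiplication by prod_{j in S} y_j^(m-n) (tensor product of the maps
   "multiplication by y_j^(m-n) in degree 1, identity in degree 0") *)
Definition koszul_cmp (l m n : nat) (y : 'I_l -> R) (c : {set 'I_l} -> R)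
    (S : {set 'I_l}) : R :=
  (\prod_(j in S) y j ^+ (m - n)) * c S.

(* the induced map H_i(y^m) -> H_i(y^n) is zero: every i-cycle of K(y^m)
   is sent to an i-boundary of K(y^n) *)
Definition koszul_map_zero (l : nat) (y : 'I_l -> R) (m n i : nat) : Prop :=
  forall c : {set 'I_l} -> R, homog i c ->
    (forall T, koszul_d (fun j => y j ^+ m) c T = 0) ->
    exists b : {set 'I_l} -> R, homog i.+1 b /\
      forall S, koszul_cmp m n y c S = koszul_d (fun j => y j ^+ n) b S.

Definition weakly_proregular (xs : seq R) : Prop :=
  forall n : nat, exists2 m : nat, (n <= m)%N &
    forall i : nat, (0 < i)%N ->
      koszul_map_zero (fun j : 'I_(size xs) => xs`_j) m n i.

(* C(x)^l = R_{x_1...x_l}; its elements are fractions r/f^k, f = prod x_j,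
   and r/f^k = s/f^e in R_f iff f^N (r f^e - s f^k) = 0 for some N.
   H^l_x(R) = C^l / im(d^{l-1}), where C^{l-1} = (+)_i R_{f_i},
   f_i = prod_{j<>i} x_j, and a/f_i^e maps to a x_i^e / f^e.
   (Sums of such terms can be brought to a common exponent e.)
   cech_top_zero xs r k  <=>  the class of r/f^k in H^l_x(R) is zero. *)
Definition cech_top_zero (xs : seq R) (r : R) (k : nat) : Prop :=
  let f := \prod_(x <- xs) x in
  exists (a : 'I_(size xs) -> R) (e N : nat),
    f ^+ N * (r * f ^+ e - (\sum_(i < size xs) a i * xs`_i ^+ e) * f ^+ k) = 0.

(* H^l_x(R)_p <> 0: some element z/s of the localization (z in H^l_x(R),
   s notin p) is nonzero, i.e. there is no u notin p with u*(1*z - s*0) = 0. *)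
Definition top_cech_loc_nonzero (xs : seq R) (p : R -> Prop) : Prop :=
  exists (r : R) (k : nat) (s : R), ~ p s /\
    ~ (exists u : R, ~ p u /\ cech_top_zero xs (u * r) k).

Definition parameter_seq (xs : seq R) : Prop :=
  [/\ weakly_proregular xs, ~ in_ideal xs 1 &
      forall p : R -> Prop, prime_ideal p ->
        (forall r, in_ideal xs r -> p r) -> top_cech_loc_nonzero xs p].

Definition strong_parameter_seq (xs : seq R) : Prop :=
  forall i : nat, (1 <= i <= size xs)%N -> parameter_seq (take i xs).

Definition regular_seq (xs : seq R) : Prop :=
  (forall i : nat, (i < size xs)%N -> forall r : R,
      in_ideal (take i xs) (xs`_i * r) -> in_ideal (take i xs) r)
  /\ ~ in_ideal xs 1.

Definition CohenMacaulay : Prop :=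
  forall xs : seq R, strong_parameter_seq xs -> regular_seq xs.

End Defs.

(* Main.v *)
Require Import Defs.
From mathcomp Require Import all_boot all_order all_algebra.
From Stdlib Require Import Classical ClassicalEpsilon.
Unset Printing Implicit Defensive.
Import GRing.Theory.
Local Open Scope ring_scope.

Section Aux.
Variable R : comNzRingType.
Implicit Types xs : seq R.

Lemma ord_nat_fun (T : Type) (t0 : T) n (c : 'I_n -> T) :
  exists c' : nat -> T, forall i : 'I_n, c' i = c i.
Proof.
exists (fun j => if insub j is Some k then c k else t0) => i.
by rewrite valK.
Qed.

End Aux.
Lemma in_idealE (R : comNzRingType) (xs : seq R) r : in_ideal xs r <->
  exists c : nat -> R, r = \sum_(j < size xs) c j * xs`_j.
Proof.
split.
- case=> c ->; have [c' Hc] := ord_nat_fun _ 0 _ c; exists c'.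
  by apply: eq_bigr => j _; rewrite Hc.
- by case=> c ->; exists (fun j => c j).
Qed.

Section Aux2.
Variable R : comNzRingType.
Implicit Types xs : seq R.
Lemma size_mapC xs : size (map polyC xs) = size xs.
Proof. by rewrite size_map. Qed.

Lemma nth_mapC xs j : (map polyC xs)`_j = (xs`_j)%:P.
Proof.
case: (ltnP j (size xs)) => h; first by rewrite (nth_map 0).
by rewrite !nth_default ?size_map.
Qed.

Lemma in_ideal_up xs r : in_ideal xs r -> in_ideal (map polyC xs) r%:P.
Proof.
move/in_idealE=> [c ->]; apply/in_idealE; exists (fun j => (c j)%:P).
rewrite size_mapC rmorph_sum; apply: eq_bigr => j _.
by rewrite nth_mapC rmorphM.
Qed.

Lemma in_ideal_down xs r : in_ideal (map polyC xs) r%:P -> in_ideal xs r.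
Proof.
move/in_idealE=> [c Hc]; apply/in_idealE; exists (fun j => (c j)`_0).
have := congr1 (fun p : {poly R} => p`_0) Hc; rewrite /= coefC /= => ->.
rewrite coef_sum size_mapC; apply: eq_bigr => j _.
by rewrite nth_mapC coefMC.
Qed.

End Aux2.


Lemma koszul_d_ext (R : comNzRingType) l (y : 'I_l -> R) c1 c2 T :
  (forall S, c1 S = c2 S) -> koszul_d y c1 T = koszul_d y c2 T.
Proof. by move=> h; rewrite /koszul_d; apply: eq_bigr => j _; rewrite h. Qed.

Lemma koszul_d_coef (R : comNzRingType) l (Z : 'I_l -> {poly R}) (z : 'I_l -> R)
   (d : {set 'I_l} -> {poly R}) T k :
  (forall j, Z j = (z j)%:P) ->
  (koszul_d Z d T)`_k = koszul_d z (fun S => (d S)`_k) T.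
Proof.
move=> hZ; rewrite /koszul_d coef_sum; apply: eq_bigr => j _.
rewrite hZ.
have -> : ((-1) ^+ #|[set k0 in T | (k0 < j)%N]| * (z j)%:P : {poly R})
   = ((-1) ^+ #|[set k0 in T | (k0 < j)%N]| * z j)%:P.
  by rewrite rmorphM rmorphXn rmorphN1.
by rewrite coefCM.
Qed.

Lemma kmz_up (R : comNzRingType) l (y : 'I_l -> R) m n i :
  koszul_map_zero y m n i -> koszul_map_zero (fun j => (y j)%:P) m n i.
Proof.
move=> H c hc cyc.
pose ck k (S : {set 'I_l}) := (c S)`_k.
have hck : forall k, homog i (ck k).
  by move=> k S hS; rewrite /ck hc // coef0.
have cyck : forall k T, koszul_d (fun j => y j ^+ m) (ck k) T = 0.
  move=> k T; rewrite -(koszul_d_coef _ _ (fun j => (y j)%:P ^+ m)).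
    by rewrite cyc coef0.
  by move=> j; rewrite rmorphXn.
have hb : forall k, exists b, homog i.+1 b /\
    forall S, koszul_cmp m n y (ck k) S = koszul_d (fun j => y j ^+ n) b S.
  by move=> k; apply: H.
pose bk k := proj1_sig (constructive_indefinite_description _ (hb k)).
have bkP : forall k, homog i.+1 (bk k) /\
    forall S, koszul_cmp m n y (ck k) S = koszul_d (fun j => y j ^+ n) (bk k) S.
  by move=> k; exact: (proj2_sig (constructive_indefinite_description _ (hb k))).
pose D := (\max_(S : {set 'I_l}) size (c S))%N.
exists (fun S => \poly_(k < D) bk k S); split.
  move=> S hS; apply/polyP => k; rewrite coef_poly coef0.
  by case: ifP => // _; case: (bkP k) => hh _; apply: hh.
move=> S; apply/polyP => k.
have -> : (koszul_cmp m n (fun j : 'I_l => (y j)%:P) c S)`_k = koszul_cmp m n y (ck k) S.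
  rewrite /koszul_cmp /ck.
  have -> : (\prod_(j in S) (y j)%:P ^+ (m - n) : {poly R})
        = (\prod_(j in S) y j ^+ (m - n))%:P.
    by rewrite rmorph_prod; apply: eq_bigr => j _; rewrite rmorphXn.
  by rewrite coefCM.
rewrite (koszul_d_coef _ _ _ (fun j => y j ^+ n)); last by move=> j; rewrite rmorphXn.
rewrite (koszul_d_ext _ _ _ _ (fun T => if (k < D)%N then bk k T else 0)); last first.
  by move=> T; rewrite coef_poly.
case hk: (k < D)%N.
  by case: (bkP k) => _ ->; apply: koszul_d_ext.
rewrite /koszul_d big1 ?mulr0 //; last by move=> j _; rewrite mulr0.
rewrite /koszul_cmp /ck nth_default ?mulr0 //.
apply: leq_trans (leq_bigmax (F := fun S => size (c S)) S) _.
by rewrite leqNgt hk.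
Qed.

From Stdlib Require Import FunctionalExtensionality.

Lemma kmz_cast (R : comNzRingType) l l' (e : l = l') (y : 'I_l -> R)
   (y' : 'I_l' -> R) m n i :
  (forall j : 'I_l', y' j = y (cast_ord (esym e) j)) ->
  koszul_map_zero y m n i -> koszul_map_zero y' m n i.
Proof.
case: l' / e y' => y' hy.
have -> : y' = y by apply: functional_extensionality => j; rewrite hy cast_ord_id.
by [].
Qed.

Lemma wpr_up (R : comNzRingType) (xs : seq R) :
  weakly_proregular xs -> weakly_proregular (map polyC xs).
Proof.
move=> H n; case: (H n) => m hnm hm; exists m => // i hi.
apply: (kmz_cast _ _ _ (esym (size_mapC _ xs)) _ _ _ _ _ _ (kmz_up _ _ _ _ _ _ (hm i hi))).
by move=> j; rewrite nth_mapC.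
Qed.

Lemma cechE (R : comNzRingType) (xs : seq R) r k : cech_top_zero xs r k <->
  exists (a : nat -> R) (e N : nat),
    (\prod_(x <- xs) x) ^+ N * (r * (\prod_(x <- xs) x) ^+ e
      - (\sum_(i < size xs) a i * xs`_i ^+ e) * (\prod_(x <- xs) x) ^+ k) = 0.
Proof.
split.
- case=> a [e [N H]]; have [a' Ha] := ord_nat_fun _ 0 _ a.
  exists a', e, N; rewrite (eq_bigr (fun i : 'I_(size xs) => a i * xs`_i ^+ e)) //.
  by move=> i _; rewrite Ha.
- by case=> a [e [N H]]; exists (fun i => a i), e, N.
Qed.

Lemma cech_down (R : comNzRingType) (xs : seq R) (u : {poly R}) r k j :
  cech_top_zero (map polyC xs) (u * r%:P) k -> cech_top_zero xs (u`_j * r) k.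
Proof.
move/cechE => [a [e [N H]]]; apply/cechE.
exists (fun i => (a i)`_j), e, N.
have hf : \prod_(x <- map polyC xs) x = (\prod_(x <- xs) x)%:P.
  by rewrite big_map rmorph_prod.
rewrite hf size_mapC in H.
have := congr1 (fun p : {poly R} => p`_j) H; rewrite coef0 /= => HH; apply: (eq_trans _ HH).
rewrite -!rmorphXn coefCM coefB !coefMC coef_sum. congr (_ * (_ - _ * _)).
apply: eq_bigr => i _; by rewrite nth_mapC -rmorphXn coefMC.
Qed.

Lemma prime_contract (R : comNzRingType) (P : {poly R} -> Prop) :
  prime_ideal P -> prime_ideal (fun r : R => P r%:P).
Proof.
case=> h0 hD hM h1 hp; split.
- by rewrite polyC0.
- by move=> a b ha hb; rewrite polyCD; apply: hD.
- by move=> a b hb; rewrite polyCM; apply: hM.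
- by rewrite polyC1.
- by move=> a b; rewrite polyCM; apply: hp.
Qed.

Lemma poly_in_prime (R : comNzRingType) (P : {poly R} -> Prop) (u : {poly R}) :
  prime_ideal P -> (forall j, P (u`_j)%:P) -> P u.
Proof.
case=> h0 hD hM _ _ hu; rewrite -[u]coefK poly_def.
elim/big_ind: _ => //.
by move=> i _; rewrite -mul_polyC mulrC; apply: hM.
Qed.

Lemma param_up (R : comNzRingType) (xs : seq R) :
  parameter_seq xs -> parameter_seq (map polyC xs).
Proof.
case=> hw hni htop; split.
- exact: wpr_up.
- by rewrite -polyC1 => /in_ideal_down.
move=> P hP hcont.
have hp := prime_contract _ _ hP.
have := htop _ hp (fun r h => hcont _ (in_ideal_up _ _ _ h)).
case=> r [k [s [hs hn]]].
exists r%:P, k, 1; split; first by case: hP.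
case=> u [hu hc]; apply: hn.
have [j hj] : exists j, ~ P (u`_j)%:P.
  apply: NNPP => hne; apply: hu; apply: (poly_in_prime _ _ _ hP) => j.
  by apply: NNPP => hj; apply: hne; exists j.
by exists u`_j; split => //; apply: cech_down.
Qed.

Theorem corollary4p6 (R : comNzRingType) :
  CohenMacaulay {poly R} -> CohenMacaulay R.
Proof.
move=> HCM xs hs.
have hs' : strong_parameter_seq (map polyC xs).
  move=> i hi; rewrite -map_take; apply: param_up; apply: hs.
  by rewrite size_map in hi.
have [hreg hn] := HCM _ hs'; split.
- move=> i hi r hr.
  have hi' : (i < size (map polyC xs))%N by rewrite size_map.
  have := hreg i hi' r%:P.
  rewrite -map_take nth_mapC -rmorphM => h.
  by apply: in_ideal_down; apply: h; apply: in_ideal_up.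
- by move=> h1; apply: hn; rewrite -polyC1; apply: in_ideal_up.
Qed.
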